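(* Let $f:(0,\infty)\to(0,\infty)$ be non-increasing such that $t\mapsto t^2f(t)$ is non-decreasing, let $a\ge0$, $c>0$, and define \[ F(r):=\int_0^\infty t^{-a}e^{-\frac{r^2}{c^2t}}f(t)\,dt,\qquad r>0. \] If $a\le1$, assume additionally that there exist constants $c'>0$, $\gamma'>1-a$ and $R\ge0$ such that $\frac{f(tx)}{f(t)}\le c'x^{-\gamma'}$ for all $t>R$ and $x\ge1$. Then \[ F(r)\asymp r^{-2a+2}f(r^2)\quad\text{for all } r>R_0, \] where $R_0:=\sqrt R$ if $a\le1$ and $R_0:=0$ if $a>1$.
   Context: $g(r)\asymp h(r)$ for $r\in I$ means that $g(r)/h(r)$ stays between two positive constants (independent of $r$) for all $r\in I$. *)

(* Defs.v *)
From Stdlib Require Import Reals.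
Open Scope R_scope.

Definition improper_integral_0_inf (g : R -> R) (l : R) : Prop :=
  forall eps, 0 < eps ->
    exists d N, 0 < d /\
      forall x y, 0 < x -> x <= d -> N <= y -> x <= y ->
        exists pr : Riemann_integrable g x y, Rabs (RiemannInt pr - l) < eps.

Definition integrandA2 (f : R -> R) (a c r : R) (t : R) : R :=
  Rpower t (- a) * exp (- (r ^ 2) / (c ^ 2 * t)) * f t.

(* Main.v *)
Require Import Defs.
From Coquelicot Require Import Coquelicot.
From Stdlib Require Import Reals Lra Psatz ClassicalEpsilon Classical ZArith.
Open Scope R_scope.

Lemma RI_unif (g : R -> R) a b : a <= b ->
  (forall e, 0 < e -> exists h, ex_RInt h a b /\
      forall t, a <= t <= b -> Rabs (g t - h t) <= e) ->
  Riemann_integrable g a b.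
Proof.
  intros hab H eps.
  set (e := eps / (2 * (b - a + 1))).
  assert (Hee : 0 < e).
  { unfold e. apply Rdiv_lt_0_compat. destruct eps; simpl; lra. lra. }
  destruct (constructive_indefinite_description _ (H e Hee)) as [h [hi hh]].
  apply ex_RInt_Reals_0 in hi.
  assert (he2 : 0 < eps / 2) by (destruct eps; simpl; lra).
  destruct (hi (mkposreal _ he2)) as [phi [psi [H1 H2]]].
  exists phi.
  exists (mkStepFun (StepFun_P28 1 psi (mkStepFun (StepFun_P4 a b e)))).
  split.
  - intros t ht. simpl. unfold fct_cte.
    rewrite Rmin_left in ht by lra. rewrite Rmax_right in ht by lra.
    specialize (H1 t). rewrite Rmin_left, Rmax_right in H1 by lra.
    specialize (H1 ht). specialize (hh t ht).
    replace (g t - phi t) with ((g t - h t) + (h t - phi t)) by ring.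
    eapply Rle_trans. apply Rabs_triang. lra.
  - rewrite StepFun_P30. simpl in H2. simpl.
    rewrite StepFun_P18.
    assert (e * (b - a) <= eps / 2).
    { apply Rle_trans with (e * (b - a + 1)).
      apply Rmult_le_compat_l; lra. unfold e. right; field. lra. }
    assert (0 <= e * (b - a)) by (apply Rmult_le_pos; lra).
    eapply Rle_lt_trans. apply Rabs_triang.
    rewrite Rmult_1_l, (Rabs_right (e * (b - a))) by lra. lra.
Qed.
Ltac toR := match goal with |- ?a = ?b => change (@eq R a b) end.

Lemma ind_int (u h : R -> R) x y c : x <= y ->
  (forall t, x <= t <= y -> continuous u t) ->
  (forall s t, x <= s -> s <= t -> t <= y -> h t <= h s) ->
  ex_RInt (fun t => u t * (if Rle_dec c (h t) then 1 else 0)) x y.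
Proof.
  intros hxy hu hh.
  destruct (classic (exists t, x <= t <= y /\ c <= h t)) as [[t0 [ht0 hct0]]|hn].
  - set (E := fun z => x <= z <= y /\ c <= h z).
    assert (hb : bound E). { exists y. intros z [hz _]. lra. }
    destruct (completeness E hb (ex_intro _ t0 (conj ht0 hct0))) as [p [hp1 hp2]].
    assert (hxp : t0 <= p) by (apply hp1; split; auto).
    assert (hpy : p <= y) by (apply hp2; intros z [hz _]; lra).
    apply ex_RInt_Chasles_0 with p. lra.
    + apply ex_RInt_ext with u.
      * intros t ht. rewrite Rmin_left in ht by lra. rewrite Rmax_right in ht by lra.
        destruct (classic (exists z, E z /\ t < z)) as [[z [[hz1 hz2] hz3]]|hn].
        -- destruct (Rle_dec c (h t)) as [_|hf]. toR; ring. exfalso. apply hf.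
           apply Rle_trans with (h z); auto. apply hh; lra.
        -- exfalso. assert (p <= t). { apply hp2. intros z hz.
             destruct (Rle_lt_dec z t); auto. exfalso; apply hn; eauto. } lra.
      * apply (ex_RInt_continuous (V:=R_CompleteNormedModule)). intros z hz.
        rewrite Rmin_left in hz by lra. rewrite Rmax_right in hz by lra.
        apply hu; lra.
    + apply ex_RInt_ext with (fun _ => 0).
      * intros t ht. rewrite Rmin_left in ht by lra. rewrite Rmax_right in ht by lra.
        destruct (Rle_dec c (h t)) as [hc|_]. 2: (toR; ring). exfalso.
        assert (t <= p) by (apply hp1; split; [lra|auto]). lra.
      * apply ex_RInt_const.
  - apply ex_RInt_ext with (fun _ => 0).
    + intros t ht. rewrite Rmin_left in ht by lra. rewrite Rmax_right in ht by lra.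
      destruct (Rle_dec c (h t)) as [hc|_]. 2: (toR; ring). exfalso. apply hn.
      exists t. split; auto; lra.
    + apply ex_RInt_const.
Qed.

Lemma approx_ind (u : R -> R) x y e : x <= y -> 0 < e ->
  (forall t, x <= t <= y -> continuous u t) ->
  forall N : nat, forall h : R -> R,
  (forall s t, x <= s -> s <= t -> t <= y -> h t <= h s) ->
  (forall t, x <= t <= y -> 0 <= h t <= INR N * e) ->
  exists w, ex_RInt (fun t => u t * w t) x y /\
    forall t, x <= t <= y -> 0 <= w t <= h t /\ h t <= w t + e.
Proof.
  intros hxy he hu N. induction N as [|N IH]; intros h hh hb.
  - exists (fun _ => 0). split.
    + apply ex_RInt_ext with (fun _ => 0). intros; toR; ring. apply ex_RInt_const.
    + intros t ht. specialize (hb t ht). simpl in hb. lra.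
  - destruct (IH (fun t => Rmax (h t - e) 0)) as [w' [hw'i hw']].
    + intros s t h1 h2 h3. specialize (hh s t h1 h2 h3).
      apply Rle_max_compat_r. lra.
    + intros t ht. specialize (hb t ht). rewrite S_INR in hb.
      split. apply Rmax_r. apply Rmax_lub; [rewrite Rmult_plus_distr_r, Rmult_1_l in hb; lra | apply Rmult_le_pos; [apply pos_INR|lra]].
    + exists (fun t => w' t + e * (if Rle_dec e (h t) then 1 else 0)). split.
      * apply (ex_RInt_ext (V:=R_NormedModule)) with (fun t => plus (u t * w' t)
              (scal e (u t * (if Rle_dec e (h t) then 1 else 0)))).
        { intros t _. unfold plus, scal; simpl. unfold mult; simpl.
          change (Rplus (u t * w' t) (e * (u t * (if Rle_dec e (h t) then 1 else 0))) =
            u t * (w' t + e * (if Rle_dec e (h t) then 1 else 0))). ring. }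
        apply (ex_RInt_plus (V:=R_NormedModule)). exact hw'i. apply (ex_RInt_scal (V:=R_NormedModule)). apply ind_int; auto.
      * intros t ht. specialize (hw' t ht). specialize (hb t ht).
        destruct (Rle_dec e (h t)) as [h1|h1].
        -- rewrite Rmax_left in hw' by lra. lra.
        -- rewrite Rmax_right in hw' by lra. lra.
Qed.
Lemma nat_above (r : R) : exists N : nat, r <= INR N.
Proof.
  exists (Z.abs_nat (up r)). rewrite INR_IZR_INZ, Zabs2Nat.id_abs, abs_IZR.
  destruct (archimed r) as [h _]. eapply Rle_trans. left; exact h. apply Rle_abs.
Qed.

Lemma prod_int (u f : R -> R) x y : x <= y ->
  (forall t, x <= t <= y -> continuous u t) ->
  (forall s t, x <= s -> s <= t -> t <= y -> f t <= f s) ->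
  (forall t, x <= t <= y -> 0 <= f t) ->
  Riemann_integrable (fun t => u t * f t) x y.
Proof.
  intros hxy hu hf hf0. apply RI_unif; auto. intros e he.
  assert (hui : ex_RInt u x y).
  { apply (ex_RInt_continuous (V:=R_CompleteNormedModule)). intros z hz.
    rewrite Rmin_left in hz by lra. rewrite Rmax_right in hz by lra. apply hu; lra. }
  destruct (ex_RInt_ub u x y hui) as [M hM].
  set (M' := Rabs M + 1).
  assert (hM' : 0 < M') by (unfold M'; pose proof (Rabs_pos M); lra).
  set (e' := e / M').
  assert (he' : 0 < e') by (unfold e'; apply Rdiv_lt_0_compat; lra).
  destruct (nat_above (f x / e')) as [N hN].
  destruct (approx_ind u x y e' hxy he' hu N f hf) as [w [hwi hw]].
  { intros t ht. split. apply hf0; auto.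
    apply Rle_trans with (f x). apply hf; lra.
    apply Rle_trans with (f x / e' * e'). right; field; lra.
    apply Rmult_le_compat_r; lra. }
  exists (fun t => u t * w t). split. exact hwi.
  intros t ht. specialize (hw t ht). specialize (hM t).
  rewrite Rmin_left, Rmax_right in hM by lra. specialize (hM ht).
  change (norm (u t)) with (Rabs (u t)) in hM.
  replace (u t * f t - u t * w t) with (u t * (f t - w t)) by ring.
  rewrite Rabs_mult. rewrite (Rabs_right (f t - w t)) by lra.
  apply Rle_trans with (M' * e').
  apply Rmult_le_compat; try lra. apply Rabs_pos. unfold M'. pose proof (Rle_abs M). lra.
  unfold e'. right; field; lra.
Qed.
Lemma exp_le' x y : x <= y -> exp x <= exp y.
Proof. intros [h|h]. left; apply exp_increasing; auto. subst; lra. Qed.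

Lemma ln_le_self z : 0 < z -> ln z <= z - 1.
Proof. intros hz. pose proof (exp_ineq1_le (ln z)). rewrite exp_ln in H; lra. Qed.

Lemma Rpower_gt0 x y : 0 < Rpower x y.
Proof. unfold Rpower; apply exp_pos. Qed.

Lemma sq_exp t : 0 < t -> t ^ 2 = exp (2 * ln t).
Proof. intros ht. replace (2 * ln t) with (ln t + ln t) by ring.
  rewrite exp_plus, exp_ln by auto. ring. Qed.

Definition Kl (a c : R) := exp ((a+2) * ln (a+2) + 2 * (a+2) * ln c).

Lemma key_left a c s t : 0 <= a -> 0 < c -> 0 < s -> 0 < t ->
  Rpower t (-a) * exp (- s / (c^2 * t)) * s^2 <= Kl a c * Rpower s (-a) * t^2.
Proof.
  intros ha hc hs ht.
  assert (hc2 : 0 < c^2) by nra. assert (hct : 0 < c^2 * t) by nra.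
  rewrite (sq_exp s), (sq_exp t) by auto.
  unfold Rpower, Kl. rewrite <- !exp_plus. apply exp_le'.
  set (u := s / (c^2 * t)).
  assert (hu : 0 < u). { unfold u. apply Rdiv_lt_0_compat; auto. }
  replace (- s / (c^2 * t)) with (- u) by (unfold u; field; lra).
  set (m := a + 2). assert (hm : 0 < m) by (unfold m; lra).
  assert (hl : ln (u / m) = ln s - (2 * ln c + ln t) - ln m).
  { rewrite ln_div by auto. unfold u. rewrite ln_div by auto.
    rewrite ln_mult by auto. replace (c^2) with (c*c) by ring. rewrite ln_mult by auto. ring. }
  assert (h1 : ln (u / m) <= u / m - 1) by (apply ln_le_self; apply Rdiv_lt_0_compat; auto).
  assert (h2 : m * ln (u / m) <= u).
  { apply Rle_trans with (m * (u / m)). apply Rmult_le_compat_l; lra. right; field; lra. }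
  rewrite hl in h2. unfold m in *. nra.
Qed.

Lemma u_cont a c r t : 0 < c -> 0 < t ->
  continuous (fun t => Rpower t (-a) * exp (- (r^2) / (c^2 * t))) t.
Proof.
  intros hc ht. unfold Rpower.
  apply (ex_derive_continuous (K:=R_AbsRing) (V:=R_NormedModule)).
  auto_derive. split; auto. split; auto.
  assert (0 < c * (c * 1) * t) by (repeat apply Rmult_lt_0_compat; lra). intro h; lra.
Qed.

Lemma g_int f a c r x y :
  (forall s t, 0 < s -> s <= t -> f t <= f s) ->
  (forall t, 0 < t -> 0 < f t) ->
  0 < c -> 0 < x -> x <= y -> ex_RInt (integrandA2 f a c r) x y.
Proof.
  intros hf hp hc hx hxy. apply ex_RInt_Reals_1.
  apply (prod_int (fun t => Rpower t (-a) * exp (- (r^2) / (c^2 * t))) f); auto.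
  - intros t ht. apply u_cont; lra.
  - intros s t h1 h2 h3. apply hf; lra.
  - intros t ht. left; apply hp; lra.
Qed.

Lemma g_nonneg f a c r t : (forall t, 0 < t -> 0 < f t) -> 0 < t ->
  0 <= integrandA2 f a c r t.
Proof.
  intros hp ht. unfold integrandA2. left.
  apply Rmult_lt_0_compat. apply Rmult_lt_0_compat. apply Rpower_gt0. apply exp_pos. auto.
Qed.

Lemma RInt_mono (g : R -> R) x' x y y' :
  (forall x y, 0 < x -> x <= y -> ex_RInt g x y) ->
  (forall t, 0 < t -> 0 <= g t) ->
  0 < x' -> x' <= x -> x <= y -> y <= y' -> RInt g x y <= RInt g x' y'.
Proof.
  intros hi hg h1 h2 h3 h4.
  rewrite <- (RInt_Chasles g x' x y') by (apply hi; lra).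
  rewrite <- (RInt_Chasles g x y y') by (apply hi; lra).
  assert (0 <= RInt g x' x) by (apply RInt_ge_0; [lra | apply hi; lra | intros; apply hg; lra]).
  assert (0 <= RInt g y y') by (apply RInt_ge_0; [lra | apply hi; lra | intros; apply hg; lra]).
  change (plus (RInt g x' x) (plus (RInt g x y) (RInt g y y'))) with
    (RInt g x' x + (RInt g x y + RInt g y y')). lra.
Qed.

Lemma improper_sup (g : R -> R) (B : R) :
  (forall x y, 0 < x -> x <= y -> ex_RInt g x y) ->
  (forall t, 0 < t -> 0 <= g t) ->
  (forall x y, 0 < x -> x <= y -> RInt g x y <= B) ->
  exists I, improper_integral_0_inf g I /\
    (forall x y, 0 < x -> x <= y -> RInt g x y <= I) /\ I <= B.
Proof.
  intros hi hg hB.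
  set (E := fun z => exists x y, 0 < x /\ x <= y /\ z = RInt g x y).
  assert (hb : bound E). { exists B. intros z [x [y [h1 [h2 ->]]]]. apply hB; auto. }
  assert (hne : exists z, E z). { exists (RInt g 1 1). exists 1, 1. split; lra. }
  destruct (completeness E hb hne) as [I [hI1 hI2]].
  exists I. split; [|split].
  - intros eps heps.
    destruct (classic (exists x y, 0 < x /\ x <= y /\ I - eps < RInt g x y))
      as [[x0 [y0 [h1 [h2 h3]]]]|hn].
    + exists x0, y0. split; auto. intros x y hx hxd hy hxy.
      exists (ex_RInt_Reals_0 g x y (hi x y hx hxy)). rewrite <- RInt_Reals.
      assert (RInt g x0 y0 <= RInt g x y) by (apply RInt_mono; auto; lra).
      assert (RInt g x y <= I) by (apply hI1; exists x, y; auto).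
      apply Rabs_def1; lra.
    + exfalso. assert (I <= I - eps); [|lra]. apply hI2. intros z [x [y [h1 [h2 ->]]]].
      destruct (Rle_lt_dec (RInt g x y) (I - eps)); auto. exfalso; apply hn; eauto.
  - intros x y hx hxy. apply hI1. exists x, y; auto.
  - apply hI2. intros z [x [y [h1 [h2 ->]]]]. apply hB; auto.
Qed.

Lemma is_RInt_pow b s y : 1 < b -> 0 < s -> s <= y ->
  is_RInt (fun t => Rpower t (-b)) s y
    (/ (1 - b) * Rpower y (1 - b) - / (1 - b) * Rpower s (1 - b)).
Proof.
  intros hb hs hy.
  assert (hd : forall t, 0 < t -> is_derive (fun t => / (1 - b) * Rpower t (1 - b)) t (Rpower t (-b))).
  { intros t ht.
    replace (Rpower t (-b)) with (/ (1 - b) * ((1 - b) * Rpower t (1 - b - 1))).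
    apply is_derive_scal. apply is_derive_Reals. apply derivable_pt_lim_power; auto.
    replace (1 - b - 1) with (-b) by ring. field. lra. }
  apply (is_RInt_derive (V:=R_CompleteNormedModule) (fun t => / (1 - b) * Rpower t (1 - b))).
  - intros t ht. rewrite Rmin_left in ht by lra. apply hd. lra.
  - intros t ht. rewrite Rmin_left in ht by lra.
    apply (ex_derive_continuous (K:=R_AbsRing) (V:=R_NormedModule)).
    exists (- b * Rpower t (- b - 1)). apply is_derive_Reals. apply derivable_pt_lim_power; lra.
Qed.

Lemma int_pow_bound b s y : 1 < b -> 0 < s -> s <= y ->
  RInt (fun t => Rpower t (-b)) s y <= Rpower s (1 - b) / (b - 1).
Proof.
  intros hb hs hy. rewrite (is_RInt_unique _ _ _ _ (is_RInt_pow b s y hb hs hy)).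
  pose proof (Rpower_gt0 y (1 - b)).
  replace (/ (1 - b) * Rpower y (1 - b) - / (1 - b) * Rpower s (1 - b))
    with ((Rpower s (1 - b) - Rpower y (1 - b)) / (b - 1)) by (field; lra).
  unfold Rdiv. apply Rmult_le_compat_r. left; apply Rinv_0_lt_compat; lra. lra.
Qed.

Lemma right_bound f a c r A b y :
  (forall t, 0 < t -> 0 < f t) ->
  (forall s t, 0 < s -> s <= t -> f t <= f s) ->
  0 < c -> 0 < A -> 1 < b -> 0 < r -> r ^ 2 <= y ->
  (forall t, r ^ 2 <= t -> Rpower t (-a) * f t <=
      A * f (r ^ 2) * Rpower (r ^ 2) (b - a) * Rpower t (-b)) ->
  RInt (integrandA2 f a c r) (r ^ 2) y <= A / (b - 1) * Rpower (r ^ 2) (1 - a) * f (r ^ 2).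
Proof.
  intros hp hf hc hA hb hr hy hP.
  assert (hs : 0 < r ^ 2) by nra. set (s := r ^ 2) in *. clearbody s.
  set (K := A * f s * Rpower s (b - a)).
  assert (hK : 0 <= K).
  { unfold K. left. apply Rmult_lt_0_compat. apply Rmult_lt_0_compat; auto. apply Rpower_gt0. }
  assert (hex : ex_RInt (fun t => Rpower t (-b)) s y) by (eexists; apply is_RInt_pow; auto).
  apply Rle_trans with (RInt (fun t => scal K (Rpower t (-b))) s y).
  - apply RInt_le; auto.
    + apply g_int; auto.
    + apply (ex_RInt_scal (V:=R_NormedModule)). auto.
    + intros t ht. change (scal K (Rpower t (-b))) with (K * Rpower t (-b)).
      unfold K. rewrite <- (hP t) by lra. unfold integrandA2. clear K hK.
      pose proof (Rpower_gt0 t (-a)). pose proof (hp t ltac:(lra)).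
      assert (exp (- r ^ 2 / (c ^ 2 * t)) <= 1).
      { rewrite <- exp_0. apply exp_le'. unfold Rdiv. rewrite Ropp_mult_distr_l_reverse.
        apply Ropp_le_cancel. rewrite Ropp_0, Ropp_involutive.
        apply Rmult_le_pos. apply pow_le; lra. left; apply Rinv_0_lt_compat. apply Rmult_lt_0_compat; [apply pow_lt; lra | lra]. }
      assert (0 < exp (- r ^ 2 / (c ^ 2 * t))) by apply exp_pos.
      apply Rle_trans with (Rpower t (-a) * 1 * f t); [apply Rmult_le_compat_r; [lra | apply Rmult_le_compat_l; lra] | right; ring].
  - rewrite (RInt_scal (V:=R_CompleteNormedModule)) by auto. change (scal K (RInt (fun t => Rpower t (-b)) s y)) with
      (K * RInt (fun t => Rpower t (-b)) s y).
    apply Rle_trans with (K * (Rpower s (1 - b) / (b - 1))).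
    apply Rmult_le_compat_l; auto. apply int_pow_bound; auto.
    unfold K. replace (Rpower s (1 - a)) with (Rpower s (b - a) * Rpower s (1 - b)).
    right. field. lra.
    rewrite <- Rpower_plus. f_equal. ring.
Qed.

Lemma s_Rpower s a : 0 < s -> s * Rpower s (-a) = Rpower s (1 - a).
Proof. intros hs. unfold Rminus. rewrite Rpower_plus, Rpower_1 by auto. ring. Qed.

Lemma left_bound f a c r x :
  (forall t, 0 < t -> 0 < f t) ->
  (forall s t, 0 < s -> s <= t -> f t <= f s) ->
  (forall s t, 0 < s -> s <= t -> s ^ 2 * f s <= t ^ 2 * f t) ->
  0 <= a -> 0 < c -> 0 < r -> 0 < x -> x <= r ^ 2 ->
  RInt (integrandA2 f a c r) x (r ^ 2) <= Kl a c * Rpower (r ^ 2) (1 - a) * f (r ^ 2).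
Proof.
  intros hp hf ht2 ha hc hr hx hxs.
  assert (hs : 0 < r ^ 2) by (apply pow_lt; lra).
  assert (hK : 0 < Kl a c) by apply exp_pos.
  pose proof (Rpower_gt0 (r^2) (-a)) as hRs. pose proof (hp (r^2) hs) as hfs.
  assert (hC : 0 <= Kl a c * Rpower (r ^ 2) (- a) * f (r ^ 2)).
  { left. repeat apply Rmult_lt_0_compat; auto. }
  apply Rle_trans with (RInt (fun _ => Kl a c * Rpower (r ^ 2) (- a) * f (r ^ 2)) x (r ^ 2)).
  - apply RInt_le; auto.
    + apply g_int; auto.
    + apply ex_RInt_const.
    + intros t ht. unfold integrandA2.
      assert (htp : 0 < t) by lra.
      pose proof (key_left a c (r ^ 2) t ha hc hs htp) as hk.
      apply Rmult_le_reg_r with ((r ^ 2) ^ 2). apply pow_lt; auto.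
      apply Rle_trans with (Kl a c * Rpower (r ^ 2) (- a) * t ^ 2 * f t).
      * replace (Rpower t (- a) * exp (- r ^ 2 / (c ^ 2 * t)) * f t * (r ^ 2) ^ 2)
          with ((Rpower t (- a) * exp (- r ^ 2 / (c ^ 2 * t)) * (r ^ 2) ^ 2) * f t) by ring.
        apply Rmult_le_compat_r; [left; auto | exact hk].
      * replace (Kl a c * Rpower (r ^ 2) (- a) * t ^ 2 * f t) with
          ((Kl a c * Rpower (r ^ 2) (- a)) * (t ^ 2 * f t)) by ring.
        replace (Kl a c * Rpower (r ^ 2) (- a) * f (r ^ 2) * (r ^ 2) ^ 2) with
          ((Kl a c * Rpower (r ^ 2) (- a)) * ((r ^ 2) ^ 2 * f (r ^ 2))) by ring.
        apply Rmult_le_compat_l. left; apply Rmult_lt_0_compat; auto.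
        apply ht2; lra.
  - rewrite RInt_const. change (scal (r ^ 2 - x) (Kl a c * Rpower (r ^ 2) (- a) * f (r ^ 2)))
      with ((r ^ 2 - x) * (Kl a c * Rpower (r ^ 2) (- a) * f (r ^ 2))).
    apply Rle_trans with (r ^ 2 * (Kl a c * Rpower (r ^ 2) (- a) * f (r ^ 2))).
    apply Rmult_le_compat_r; auto; lra.
    rewrite <- s_Rpower by auto. right; ring.
Qed.

Definition C1A2 (a c : R) := Rpower 2 (- a) * exp (- / c ^ 2) / 4.

Lemma lower_bound f a c r :
  (forall t, 0 < t -> 0 < f t) ->
  (forall s t, 0 < s -> s <= t -> f t <= f s) ->
  (forall s t, 0 < s -> s <= t -> s ^ 2 * f s <= t ^ 2 * f t) ->
  0 <= a -> 0 < c -> 0 < r ->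
  C1A2 a c * Rpower (r ^ 2) (1 - a) * f (r ^ 2) <= RInt (integrandA2 f a c r) (r ^ 2) (2 * r ^ 2).
Proof.
  intros hp hf ht2 ha hc hr.
  assert (hs : 0 < r ^ 2) by (apply pow_lt; lra).
  assert (hc2 : 0 < c ^ 2) by (apply pow_lt; lra).
  set (C := Rpower (2 * r ^ 2) (- a) * exp (- / c ^ 2) * (f (r ^ 2) / 4)).
  assert (hC : 0 <= C).
  { unfold C. left. apply Rmult_lt_0_compat. apply Rmult_lt_0_compat; [apply Rpower_gt0 | apply exp_pos].
    apply Rdiv_lt_0_compat; [auto | lra]. }
  apply Rle_trans with (RInt (fun _ => C) (r ^ 2) (2 * r ^ 2)).
  - rewrite RInt_const. change (scal (2 * r ^ 2 - r ^ 2) C) with ((2 * r ^ 2 - r ^ 2) * C).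
    subst C. unfold C1A2. rewrite <- Rpower_mult_distr by lra. rewrite <- s_Rpower by auto.
    right. field.
  - subst C. apply RInt_le; [lra | apply ex_RInt_const | apply g_int; auto; lra | ].
    + intros t ht. unfold integrandA2.
      assert (htp : 0 < t) by lra.
      apply Rmult_le_compat.
      * left; apply Rmult_lt_0_compat; [apply Rpower_gt0 | apply exp_pos].
      * left; apply Rdiv_lt_0_compat; [auto | lra].
      * apply Rmult_le_compat.
        -- left; apply Rpower_gt0.
        -- left; apply exp_pos.
        -- rewrite !Rpower_Ropp. apply Rinv_le_contravar. apply Rpower_gt0.
           apply Rle_Rpower_l; auto; lra.
        -- apply exp_le'.
           assert (h1 : r ^ 2 * / t <= 1).
           { apply Rmult_le_reg_r with t; auto. rewrite Rmult_assoc, Rinv_l by lra. lra. }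
           replace (- r ^ 2 / (c ^ 2 * t)) with (- (/ c ^ 2 * (r ^ 2 * / t)))
             by (field; split; lra).
           apply Ropp_le_contravar. rewrite <- (Rmult_1_r (/ c ^ 2)) at 2.
           apply Rmult_le_compat_l; auto. left; apply Rinv_0_lt_compat; auto.
      * apply Rle_trans with (f (2 * r ^ 2)); [|apply hf; lra].
        pose proof (ht2 (r ^ 2) (2 * r ^ 2) hs ltac:(lra)) as h.
        apply Rmult_le_reg_l with ((r ^ 2) ^ 2). apply pow_lt; auto.
        apply Rle_trans with ((r ^ 2) ^ 2 * f (r ^ 2) / 4). right; field.
        replace ((2 * r ^ 2) ^ 2) with (4 * (r ^ 2) ^ 2) in h by ring. lra.
Qed.

Lemma rp r a : 0 < r -> Rpower (r ^ 2) (1 - a) = Rpower r (- 2 * a + 2).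
Proof.
  intros hr. rewrite <- (Rpower_pow 2 r) by auto. rewrite Rpower_mult. f_equal. simpl. ring.
Qed.

Lemma core f a c A b r :
  (forall t, 0 < t -> 0 < f t) ->
  (forall s t, 0 < s -> s <= t -> f t <= f s) ->
  (forall s t, 0 < s -> s <= t -> s ^ 2 * f s <= t ^ 2 * f t) ->
  0 <= a -> 0 < c -> 0 < A -> 1 < b -> 0 < r ->
  (forall t, r ^ 2 <= t -> Rpower t (-a) * f t <=
      A * f (r ^ 2) * Rpower (r ^ 2) (b - a) * Rpower t (-b)) ->
  exists I, improper_integral_0_inf (integrandA2 f a c r) I /\
    C1A2 a c * (Rpower r (- 2 * a + 2) * f (r ^ 2)) <= I /\
    I <= (Kl a c + A / (b - 1)) * (Rpower r (- 2 * a + 2) * f (r ^ 2)).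
Proof.
  intros hp hf ht2 ha hc hA hb hr hP.
  assert (hs : 0 < r ^ 2) by (apply pow_lt; lra).
  rewrite <- rp by auto.
  destruct (improper_sup (integrandA2 f a c r)
     ((Kl a c + A / (b - 1)) * (Rpower (r ^ 2) (1 - a) * f (r ^ 2)))) as [I [h1 [h2 h3]]].
  - intros x y hx hxy. apply g_int; auto.
  - intros t ht. apply g_nonneg; auto.
  - intros x y hx hxy.
    apply Rle_trans with (RInt (integrandA2 f a c r) (Rmin x (r ^ 2)) (Rmax y (r ^ 2))).
    { apply RInt_mono.
      - intros; apply g_int; auto.
      - intros; apply g_nonneg; auto.
      - apply Rmin_glb_lt; auto.
      - apply Rmin_l.
      - auto.
      - apply Rmax_l. }
    assert (hm1 : 0 < Rmin x (r ^ 2)) by (apply Rmin_glb_lt; auto).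
    assert (hm2 : Rmin x (r ^ 2) <= r ^ 2) by apply Rmin_r.
    assert (hm3 : r ^ 2 <= Rmax y (r ^ 2)) by apply Rmax_r.
    rewrite <- (RInt_Chasles (integrandA2 f a c r) _ (r ^ 2)) by (apply g_int; auto; lra).
    change (plus ?u ?v) with (u + v).
    pose proof (left_bound f a c r (Rmin x (r ^ 2)) hp hf ht2 ha hc hr hm1 hm2).
    pose proof (right_bound f a c r A b (Rmax y (r ^ 2)) hp hf hc hA hb hr hm3 hP).
    lra.
  - exists I. split; auto. split; auto.
    pose proof (lower_bound f a c r hp hf ht2 ha hc hr).
    assert (RInt (integrandA2 f a c r) (r ^ 2) (2 * r ^ 2) <= I) by (apply h2; lra).
    lra.
Qed.

Theorem lemmaA2 (f : R -> R) (a c R0 : R)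
  (hf_pos : forall t, 0 < t -> 0 < f t)
  (hf_noninc : forall s t, 0 < s -> s <= t -> f t <= f s)
  (hf_t2 : forall s t, 0 < s -> s <= t -> s ^ 2 * f s <= t ^ 2 * f t)
  (ha : 0 <= a) (hc : 0 < c) (hR : 0 <= R0)
  (hdecay : a <= 1 ->
     exists c' g', 0 < c' /\ 1 - a < g' /\
       forall t x, R0 < t -> 1 <= x -> f (t * x) / f t <= c' * Rpower x (- g')) :
  exists C1 C2, 0 < C1 /\ 0 < C2 /\
    forall r, (if Rle_dec a 1 then sqrt R0 else 0) < r ->
      exists I, improper_integral_0_inf (integrandA2 f a c r) I /\
        C1 * (Rpower r (- 2 * a + 2) * f (r ^ 2)) <= I /\
        I <= C2 * (Rpower r (- 2 * a + 2) * f (r ^ 2)).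
Proof.
  assert (hC1 : 0 < C1A2 a c).
  { unfold C1A2. apply Rdiv_lt_0_compat; [|lra].
    apply Rmult_lt_0_compat; [apply Rpower_gt0 | apply exp_pos]. }
  assert (hKl : 0 < Kl a c) by apply exp_pos.
  destruct (Rle_dec a 1) as [ha1|ha1].
  - destruct (hdecay ha1) as [c' [g' [hc' [hg' hd]]]].
    exists (C1A2 a c), (Kl a c + c' / (a + g' - 1)). split; auto. split.
    { assert (0 < c' / (a + g' - 1)) by (apply Rdiv_lt_0_compat; lra). lra. }
    intros r hr.
    pose proof (sqrt_pos R0). pose proof (sqrt_sqrt R0 hR).
    assert (hr0 : 0 < r) by lra.
    assert (hRs : R0 < r ^ 2) by nra.
    assert (hs : 0 < r ^ 2) by lra.
    replace (a + g' - 1) with ((a + g') - 1) by ring.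
    apply core; auto; try lra.
    intros t ht.
    assert (htp : 0 < t) by lra.
    assert (hx : 1 <= t / r ^ 2).
    { apply Rmult_le_reg_r with (r ^ 2); auto. field_simplify; lra. }
    specialize (hd (r ^ 2) (t / r ^ 2) hRs hx).
    replace (r ^ 2 * (t / r ^ 2)) with t in hd by (field; lra).
    pose proof (hf_pos t htp). pose proof (hf_pos (r ^ 2) hs).
    assert (hft : f t <= c' * Rpower (t / r ^ 2) (- g') * f (r ^ 2)).
    { apply Rmult_le_reg_r with (/ f (r ^ 2)). apply Rinv_0_lt_compat; auto.
      replace (c' * Rpower (t / r ^ 2) (- g') * f (r ^ 2) * / f (r ^ 2))
        with (c' * Rpower (t / r ^ 2) (- g')) by (field; lra). exact hd. }
    assert (heq : Rpower t (-a) * Rpower (t / r ^ 2) (- g') =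
                  Rpower (r ^ 2) (a + g' - a) * Rpower t (- (a + g'))).
    { unfold Rpower. rewrite ln_div by lra. rewrite <- !exp_plus. f_equal. ring. }
    apply Rle_trans with (Rpower t (-a) * (c' * Rpower (t / r ^ 2) (- g') * f (r ^ 2))).
    apply Rmult_le_compat_l; auto. left; apply Rpower_gt0.
    replace (Rpower t (-a) * (c' * Rpower (t / r ^ 2) (- g') * f (r ^ 2))) with
      (c' * f (r ^ 2) * (Rpower t (-a) * Rpower (t / r ^ 2) (- g'))) by ring.
    rewrite heq. right; ring.
  - exists (C1A2 a c), (Kl a c + 1 / (a - 1)). split; auto. split.
    { assert (0 < 1 / (a - 1)) by (apply Rdiv_lt_0_compat; lra). lra. }
    intros r hr.
    assert (hs : 0 < r ^ 2) by (apply pow_lt; lra).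
    apply core; auto; try lra.
    intros t ht.
    replace (a - a) with 0 by ring. rewrite Rpower_O by auto.
    pose proof (Rpower_gt0 t (-a)).
    apply Rle_trans with (Rpower t (-a) * f (r ^ 2)).
    apply Rmult_le_compat_l; [lra | apply hf_noninc; auto].
    right; ring.
Qed.
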